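(* Let $(M,q)$ be an instance of TNECP and let $\kappa$ be the number of connected components of its associated graph $G$. Then the TNECP instance has at least $2^\kappa-1$ solutions, and if the instance is nondegenerate it has exactly $2^\kappa-1$ solutions.
   Context: $\mathbb{T}=\mathbb{R}\cup\{-\infty\}$, $\oplus=\max$, $\odot=+$; convention $a-(-\infty)=+\infty$. A TNECP instance is $M\in\mathbb{T}^{n\times n}$, $q\in\mathbb{T}^n$ with no all-$(-\infty)$ column in $M$ and no $-\infty$ entry in $q$; a solution is $(w,z)\in\mathbb{T}^n\times\mathbb{T}^n$ with $w\oplus M\odot z=q$ (i.e. $\max(w_i,\max_j(M_{ij}+z_j))=q_i$), $\max_i(w_i+z_i)=-\infty$, and $z$ not the all-$(-\infty)$ vector. The instance is nondegenerate if for each $j$ the minimum $\min_k(q_k-M_{kj})$ is attained by exactly one $k$. The graph $G$ is the bipartite multigraph with row nodes $u_1,\dots,u_n$, column nodes $v_1,\dots,v_n$, a blue edge $u_iv_i$ for every $i$, and a red edge $u_iv_j$ whenever $q_i-M_{ij}=\min_k(q_k-M_{kj})$. *)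

(* Defs.v *)
From mathcomp Require Import all_boot all_order all_algebra.
Set Implicit Arguments. Unset Strict Implicit. Unset Printing Implicit Defensive.
Import Order.TTheory GRing.Theory Num.Theory.
Local Open Scope ring_scope.

Section Tropical.
Variable R : realFieldType.

(* Tropical numbers T = R u {-oo}: [None] is -oo, [Some x] is x. *)
Definition tmax (a b : option R) : option R :=
  match a, b with
  | None, _ => b
  | _, None => a
  | Some x, Some y => Some (Num.max x y)
  end.

Definition tadd (a b : option R) : option R :=
  match a, b with
  | Some x, Some y => Some (x + y)
  | _, _ => None
  end.

(* Upper-extended reals R u {+oo} (here [None] is +oo) for the
   quantities q_i - M_ij, with the convention a - (-oo) = +oo. *)
Definition umin (a b : option R) : option R :=
  match a, b with
  | None, _ => b
  | _, None => a
  | Some x, Some y => Some (Num.min x y)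
  end.

Variable n : nat.
Variables (M : 'M[option R]_n) (q : 'I_n -> R).

Definition qdiff (i j : 'I_n) : option R :=
  match M i j with
  | Some m => Some (q i - m)
  | None => None
  end.

Definition colmin (j : 'I_n) : option R := \big[umin/None]_(k < n) qdiff k j.

Definition red_edge (i j : 'I_n) : bool := qdiff i j == colmin j.

(* adjacency of the bipartite (multi)graph G on nodes u_i = inl i, v_j = inr j;
   blue edges u_i v_i and red edges; multiplicities are irrelevant for
   connectivity. *)
Definition Gadj : rel ('I_n + 'I_n) := fun x y =>
  match x, y with
  | inl i, inr j => (i == j) || red_edge i j
  | inr j, inl i => (i == j) || red_edge i j
  | _, _ => false
  end.

Definition tnecp_kappa : nat := n_comp Gadj predT.

Definition tnecp_nondegenerate : Prop :=
  forall j : 'I_n, #|[pred k : 'I_n | qdiff k j == colmin j]| = 1%N.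

Definition tmatvec (z : 'I_n -> option R) (i : 'I_n) : option R :=
  \big[tmax/None]_(j < n) tadd (M i j) (z j).

Definition tnecp_solution (w z : 'I_n -> option R) : Prop :=
  (forall i : 'I_n, tmax (w i) (tmatvec z i) = Some (q i)) /\
  \big[tmax/None]_(i < n) tadd (w i) (z i) = None /\
  (exists j : 'I_n, z j != None).

End Tropical.

(* Main.v *)
Require Import Defs.
From mathcomp Require Import all_boot all_order all_algebra.
Set Implicit Arguments. Unset Strict Implicit. Unset Printing Implicit Defensive.
Import Order.TTheory GRing.Theory Num.Theory.
Local Open Scope ring_scope.

Section OptLemmas.
Variable R : realFieldType.

Definition tle (o : option R) (b : R) : bool :=
  if o is Some x then x <= b else true.

Lemma tmax_None (a b : option R) : tmax a b = None <-> a = None /\ b = None.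
Proof. by case: a => [x|]; case: b => [y|]; split => // -[]. Qed.

Lemma tmax_le (a b : option R) c : tle (tmax a b) c = tle a c && tle b c.
Proof.
case: a => [x|]; case: b => [y|] => //=; first by rewrite ge_max.
by rewrite andbT.
Qed.

Lemma tmax_Some (a b : option R) c : tmax a b = Some c -> a = Some c \/ b = Some c.
Proof.
case: a => [x|]; case: b => [y|] //=; try by [left|right].
by move=> [<-]; rewrite /Order.max; case: ifP; [right|left].
Qed.

Lemma tmax_eq (a b : option R) c : tle a c -> tle b c -> (a = Some c \/ b = Some c) ->
  tmax a b = Some c.
Proof.
case: a => [x|]; case: b => [y|] //= hx hy [] [] E; subst => //.
  by congr Some; apply/le_anti; rewrite ge_max lexx hy le_max lexx.
by congr Some; apply/le_anti; rewrite ge_max lexx hx le_max lexx orbT.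
Qed.

Variable I : eqType.

Lemma bigtmax_None (r : seq I) (F : I -> option R) :
  \big[@tmax R/None]_(k <- r) F k = None <-> (forall k, k \in r -> F k = None).
Proof.
elim: r => [|a r IH]; first by rewrite big_nil; split.
rewrite big_cons; split.
  by move=> /tmax_None [h1 /IH h] k; rewrite inE => /orP[/eqP->|/h].
move=> h; rewrite h ?mem_head //=; apply/IH => k kr; apply: h; by rewrite inE kr orbT.
Qed.

Lemma bigtmax_le (r : seq I) (F : I -> option R) c :
  tle (\big[@tmax R/None]_(k <- r) F k) c = all (fun k => tle (F k) c) r.
Proof. elim: r => [|a r IH]; first by rewrite big_nil. by rewrite big_cons tmax_le IH. Qed.

Lemma bigtmax_Some (r : seq I) (F : I -> option R) c :
  \big[@tmax R/None]_(k <- r) F k = Some c -> exists2 k, k \in r & F k = Some c.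
Proof.
elim: r => [|a r IH]; first by rewrite big_nil.
rewrite big_cons => /tmax_Some [h|/IH [k kr h]]; first by exists a; rewrite ?mem_head.
by exists k; rewrite // inE kr orbT.
Qed.

Lemma bigtmax_eq (r : seq I) (F : I -> option R) c :
  all (fun k => tle (F k) c) r -> (exists2 k, k \in r & F k = Some c) ->
  \big[@tmax R/None]_(k <- r) F k = Some c.
Proof.
elim: r => [|a r IH]; first by move=> _ [].
rewrite big_cons /= => /andP[ha hr] [k]; rewrite inE => /orP[/eqP-> hk|kr hk].
  by apply: tmax_eq => //; [rewrite bigtmax_le|left].
apply: tmax_eq => //; first by rewrite bigtmax_le.
by right; apply: IH => //; exists k.
Qed.

Lemma bigumin_Some (r : seq I) (F : I -> option R) c :
  \big[@umin R/None]_(k <- r) F k = Some c -> exists2 k, k \in r & F k = Some c.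
Proof.
elim: r c => [|a r IH] c; first by rewrite big_nil.
rewrite big_cons.
case Ea: (F a) => [y|]; case Eb: (\big[@umin R/None]_(k <- r) F k) => [z|] //=.
- move=> [<-]; rewrite /Order.min; case: ifP => _; first by exists a; rewrite ?mem_head.
  by have [k kr hk] := IH _ Eb; exists k; rewrite // inE kr orbT.
- by move=> [<-]; exists a; rewrite ?mem_head.
- by move=> [<-]; have [k kr hk] := IH _ Eb; exists k; rewrite // inE kr orbT.
Qed.

Lemma bigumin_le (r : seq I) (F : I -> option R) k x :
  k \in r -> F k = Some x ->
  exists c, \big[@umin R/None]_(k <- r) F k = Some c /\ c <= x.
Proof.
elim: r => [|a r IH] //; rewrite big_cons inE => /orP[/eqP<- hk|kr hk].
  rewrite hk /=; case: (\big[@umin R/None]_(k <- r) F k) => [z|]; last by exists x.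
  by exists (Order.min x z); rewrite ge_min lexx.
have [c [-> hc]] := IH kr hk.
case: (F a) => [y|] /=; last by exists c.
by exists (Order.min y c); rewrite ge_min hc orbT.
Qed.

End OptLemmas.
Section Comb.
Variable T : finType.
Variable g : T -> T.
Local Open Scope nat_scope.

Definition Aset k : {set T} := [set iter k g x | x in T].

Lemma AsetS k : Aset k.+1 = g @: Aset k.
Proof.
rewrite /Aset -imset_comp; apply: eq_imset => x /=; by [].
Qed.

Lemma Aset_sub k : Aset k.+1 \subset Aset k.
Proof.
apply/subsetP => _ /imsetP[x _ ->]; rewrite iterSr; exact: imset_f.
Qed.

Lemma Aset_stab_from k m : Aset k.+1 = Aset k -> k <= m -> Aset m = Aset k.
Proof.
move=> hk; elim: m => [|m IH]; first by rewrite leqn0 => /eqP->.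
rewrite leq_eqVlt => /orP[/eqP<- //|/IH hm].
by rewrite AsetS hm -AsetS.
Qed.

Lemma Aset_card k : (forall j, j < k -> Aset j.+1 != Aset j) -> #|Aset k| + k <= #|T|.
Proof.
elim: k => [|k IH] h; first by rewrite addn0 max_card.
have h1 : #|Aset k.+1| < #|Aset k|.
  rewrite ltn_neqAle subset_leq_card ?Aset_sub // andbT.
  apply/negP => /eqP e; move: (h k (ltnSn k)); rewrite eqEcard Aset_sub e leqnn //.
have := IH (fun j hj => h j (ltnW hj)); rewrite addnS; apply: leq_trans.
by rewrite ltn_add2r.
Qed.

Definition Pset : {set T} := Aset #|T|.

Lemma Pset_stable : g @: Pset = Pset.
Proof.
rewrite /Pset -AsetS.
have [[k hk] | hno] : (exists k, k <= #|T| /\ Aset k.+1 = Aset k) \/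
                       (forall k, k <= #|T| -> Aset k.+1 != Aset k).
  case: (boolP [exists k : 'I_#|T|.+1, Aset k.+1 == Aset k]).
    by move=> /existsP[k /eqP e]; left; exists k; rewrite -ltnS ltn_ord.
  move=> /existsPn hn; right => k hk; exact: (hn (Ordinal (hk : k < #|T|.+1))).
  by rewrite (Aset_stab_from hk.2 (leqW hk.1)) (Aset_stab_from hk.2 hk.1).
have := Aset_card (k := #|T|.+1) (fun j hj => hno j hj).
by rewrite addnS ltnNge leq_addl.
Qed.

Lemma Pset_g x : x \in Pset -> g x \in Pset.
Proof. by move=> h; rewrite -Pset_stable imset_f. Qed.

Lemma Pset_inj : {in Pset &, injective g}.
Proof. by apply/imset_injP; rewrite Pset_stable. Qed.

Lemma Pset_iter x : iter #|T| g x \in Pset.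
Proof. exact: imset_f. Qed.

Lemma sub_Pset (S : {set T}) : g @: S = S -> S \subset Pset.
Proof.
move=> hS; suff h: forall k, S \subset Aset k by apply: h.
elim=> [|k IH].
  by apply/subsetP => x _; apply/imsetP; exists x.
by rewrite AsetS -hS imsetS.
Qed.

Lemma Pset_pre x : x \in Pset -> exists2 y, y \in Pset & g y = x.
Proof. by rewrite -{1}Pset_stable => /imsetP[y hy ->]; exists y. Qed.

End Comb.

Section Main.
Variables (R : realFieldType) (n : nat) (M : 'M[option R]_n) (q : 'I_n -> R).
Hypothesis Hcol : forall j : 'I_n, exists i : 'I_n, M i j != None.

Definition cv j : R := odflt 0 (colmin M q j).

Lemma colmin_Some j : colmin M q j = Some (cv j).
Proof.
have [i] := Hcol j; case E: (M i j) => [m|] // _.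
have hq : qdiff M q i j = Some (q i - m) by rewrite /qdiff E.
have [c [hc _]] := bigumin_le (F := fun k => qdiff M q k j) (mem_index_enum i) hq.
by rewrite /cv /colmin hc.
Qed.

Lemma cv_le i j m : M i j = Some m -> cv j <= q i - m.
Proof.
move=> E; have hq : qdiff M q i j = Some (q i - m) by rewrite /qdiff E.
have [c [hc hle]] := bigumin_le (F := fun k => qdiff M q k j) (mem_index_enum i) hq.
by move: (colmin_Some j); rewrite /colmin hc => -[<-].
Qed.

Lemma redP i j : reflect (exists2 m, M i j = Some m & q i - m = cv j) (red_edge M q i j).
Proof.
rewrite /red_edge colmin_Some /qdiff; case: (M i j) => [m|]; last by right => -[].
by apply: (iffP eqP) => [[<-]|[m' [<-] <-]]; [exists m|].
Qed.

Lemma red_exists j : exists i, red_edge M q i j.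
Proof.
have := colmin_Some j; rewrite /colmin => /bigumin_Some[i _ hi].
by exists i; rewrite /red_edge hi colmin_Some.
Qed.

Definition g (j : 'I_n) : 'I_n := odflt j [pick i | red_edge M q i j].

Lemma red_g j : red_edge M q (g j) j.
Proof.
rewrite /g; case: pickP => [i //|h]; have [i hi] := red_exists j.
by move: (h i); rewrite hi.
Qed.

Lemma Gsym : symmetric (Gadj M q).
Proof. by case=> [i|i] [j|j]. Qed.

Let csym := sym_connect_sym Gsym.

Lemma root_lr i : fingraph.root (Gadj M q) (inr i) = fingraph.root (Gadj M q) (inl i).
Proof. by apply/(fingraph.rootP csym)/connect1; rewrite /= eqxx. Qed.

Lemma root_g j : fingraph.root (Gadj M q) (inl (g j)) = fingraph.root (Gadj M q) (inl j).
Proof.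
apply/(fingraph.rootP csym); apply: (connect_trans (y := inr j)); apply: connect1 => /=.
  by rewrite red_g orbT.
by rewrite eqxx.
Qed.

Lemma root_iter k j : fingraph.root (Gadj M q) (inl (iter k g j)) = fingraph.root (Gadj M q) (inl j).
Proof. by elim: k => [//|k IH]; rewrite iterS root_g. Qed.

Lemma root_rep r : fingraph.roots (Gadj M q) r ->
  exists2 i, i \in Pset g & fingraph.root (Gadj M q) (inl i) = r.
Proof.
move=> /eqP hr; have [i0 e] : exists i0, fingraph.root (Gadj M q) (inl i0) = r.
  by case: r hr => i0 <-; exists i0; rewrite ?root_lr.
by exists (iter #|'I_n| g i0); [exact: Pset_iter | rewrite root_iter].
Qed.

Definition zS (S : {set 'I_n}) : {ffun 'I_n -> option R} :=
  [ffun j => if j \in S then Some (cv j) else None].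
Definition wS (S : {set 'I_n}) : {ffun 'I_n -> option R} :=
  [ffun i => if i \in S then None else Some (q i)].

Lemma zS_inj S1 S2 : zS S1 = zS S2 -> S1 = S2.
Proof.
move=> e; apply/setP => j; have := congr1 (fun f : {ffun 'I_n -> option R} => f j) e; rewrite !ffunE.
by case: (j \in S1); case: (j \in S2).
Qed.

Lemma tmatvec_le (z : 'I_n -> option R) i :
  (forall j, tle (tadd (M i j) (z j)) (q i)) -> tle (tmatvec M z i) (q i).
Proof. by move=> h; rewrite /tmatvec bigtmax_le; apply/allP => j _. Qed.

Lemma sol_good S : S != set0 -> S \subset g @: S -> tnecp_solution M q (wS S) (zS S).
Proof.
move=> hne hsub.
have hle i : tle (tmatvec M (zS S) i) (q i).
  apply: tmatvec_le => j; rewrite ffunE; case: (j \in S); last by case: (M i j).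
  case E: (M i j) => [m|] //=; have := cv_le E.
  by rewrite lerBrDr addrC.
split; [move=> i | split].
- rewrite ffunE; case: ifP => hi; last by apply: tmax_eq => //=; left.
  move: (subsetP hsub i hi) => /imsetP[j hj ->] /=.
  apply: bigtmax_eq; first by move: (hle (g j)); rewrite /tmatvec bigtmax_le.
  exists j; first exact: mem_index_enum.
  have /redP[m -> hm] := red_g j; rewrite ffunE hj /=; congr Some.
  by rewrite -hm addrC subrK.
- by apply/bigtmax_None => k _; rewrite !ffunE; case: (k \in S).
- by have [j hj] := set0Pn _ hne; exists j; rewrite ffunE hj.
Qed.

Definition Rt : {set ('I_n + 'I_n)} := [set x | fingraph.roots (Gadj M q) x].
Definition SK (K : {set ('I_n + 'I_n)}) : {set 'I_n} :=
  [set i in Pset g | fingraph.root (Gadj M q) (inl i) \in K].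
Definition solK K := (wS (SK K), zS (SK K)).
Definition sols := [seq solK K | K <- enum (powerset Rt :\ set0)].

Lemma kappa_Rt : tnecp_kappa M q = #|Rt|.
Proof. by apply: eq_card => x; rewrite !inE andbT. Qed.

Lemma SK_good (K : {set 'I_n + 'I_n}) : K \subset Rt -> K != set0 -> SK K != set0 /\ SK K \subset g @: SK K.
Proof.
move=> hsub hne; split.
  have [r hr] := set0Pn _ hne.
  have := subsetP hsub r hr; rewrite inE => /root_rep[i hi e].
  by apply/set0Pn; exists i; rewrite inE hi e hr.
apply/subsetP => i; rewrite inE => /andP[hi hK].
have [y hy e] := Pset_pre hi.
by apply/imsetP; exists y; rewrite // inE hy -root_g e hK.
Qed.

Lemma SK_char (K : {set 'I_n + 'I_n}) r : K \subset Rt ->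
  (r \in K) = (r \in Rt) && [exists i in SK K, fingraph.root (Gadj M q) (inl i) == r].
Proof.
move=> hsub; apply/idP/idP.
  move=> hr; have hR := subsetP hsub r hr; rewrite hR /=.
  move: hR; rewrite inE => /root_rep[i hi e].
  by apply/existsP; exists i; rewrite inE hi e hr eqxx.
by move=> /andP[_ /existsP[i /andP[]]]; rewrite inE => /andP[_ h] /eqP <-.
Qed.

Lemma SK_inj (K1 K2 : {set 'I_n + 'I_n}) : K1 \subset Rt -> K2 \subset Rt -> SK K1 = SK K2 -> K1 = K2.
Proof.
move=> h1 h2 e; apply/setP => r; by rewrite (SK_char _ h1) (SK_char _ h2) e.
Qed.

Lemma sols_uniq : uniq sols.
Proof.
rewrite map_inj_in_uniq ?enum_uniq // => K1 K2.
rewrite !mem_enum !inE => /andP[_ h1] /andP[_ h2] [_ e].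
exact: SK_inj h1 h2 (zS_inj e).
Qed.

Lemma sols_size : size sols = (2 ^ tnecp_kappa M q - 1)%N.
Proof.
rewrite size_map -cardE kappa_Rt -card_powerset (cardsD1 set0 (powerset Rt)).
by rewrite powersetE sub0set add1n subn1.
Qed.

Lemma sols_sol p : p \in sols -> tnecp_solution M q p.1 p.2.
Proof.
move=> /mapP[K]; rewrite mem_enum !inE => /andP[hne hsub] ->.
by have [h1 h2] := SK_good hsub hne; apply: sol_good.
Qed.

Lemma nondeg_red (hnd : tnecp_nondegenerate M q) i j : red_edge M q i j -> i = g j.
Proof.
move=> h.
have /card_le1P hle : (#|[pred k : 'I_n | qdiff M q k j == colmin M q j]| <= 1)%N
  by rewrite hnd.
have := hle (g j) (red_g j) i; rewrite !inE /= => e.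
by apply/eqP; rewrite -e.
Qed.

Lemma key (hred : forall i j, red_edge M q i j -> i = g j) (S : {set 'I_n}) :
  g @: S = S -> S != set0 -> exists2 K, K \in powerset Rt :\ set0 & SK K = S.
Proof.
move=> hS hne.
have hSP := sub_Pset hS.
have inv x : x \in Pset g -> (g x \in S) = (x \in S).
  move=> hx; apply/idP/idP; last by move=> xs; rewrite -hS imset_f.
  rewrite -{1}hS => /imsetP[y hy e].
  by rewrite (Pset_inj hx (subsetP hSP y hy) e).
pose pi x := iter #|'I_n| g x.
pose f : pred ('I_n + 'I_n) := fun v => match v with inl i | inr i => pi i \in S end.
have fg j : f (inl (g j)) = f (inl j).
  by rewrite /= /pi -iterSr iterS inv // Pset_iter.
have cl : closed (Gadj M q) f.
  move=> [i|i] [j|j] //= /orP[/eqP->|/hred->] //; [exact: fg | exact: esym (fg _)].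
have froot v : f (fingraph.root (Gadj M q) v) = f v.
  exact: esym (closed_connect cl (connect_root _ v)).
have pin i : i \in Pset g -> (pi i \in S) = (i \in S).
  rewrite /pi; elim: #|'I_n| => [//|k IH] hi.
  rewrite iterS inv ?IH //.
  by elim: k {IH} => [//|k IHk]; rewrite iterS Pset_g.
exists [set r | fingraph.roots (Gadj M q) r && f r].
  rewrite !inE; apply/andP; split.
    have [i hi] := set0Pn _ hne; apply/set0Pn; exists (fingraph.root (Gadj M q) (inl i)).
    by rewrite inE (fingraph.roots_root csym) froot /= pin // (subsetP hSP i hi).
  by apply/subsetP => r; rewrite !inE => /andP[].
apply/setP => i; rewrite !inE (fingraph.roots_root csym) froot /=.
case hP: (i \in Pset g); first by rewrite pin.
by apply/esym/negP => /(subsetP hSP); rewrite hP.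
Qed.

Lemma sol_in_sols (hnd : tnecp_nondegenerate M q) (w z : {ffun 'I_n -> option R}) :
  tnecp_solution M q w z -> (w, z) \in sols.
Proof.
move=> [h1 [h2 [j0 hj0]]].
have hred := nondeg_red hnd.
have hterm i j : tle (tadd (M i j) (z j)) (q i).
  have := h1 i; move=> /(congr1 (fun o => tle o (q i))); rewrite tmax_le /= lexx.
  move=> /andP[_]; rewrite /tmatvec bigtmax_le => /allP; apply; exact: mem_index_enum.
have zle j x : z j = Some x -> x <= cv j.
  move=> hx; have /redP[m hm hc] := red_g j; have := hterm (g j) j.
  by rewrite hm hx /= -hc lerBrDr addrC.
have comp i : w i = None \/ z i = None.
  have /bigtmax_None h := h2; have := h i (mem_index_enum i).
  by case: (w i) => [a|]; case: (z i) => [b|] //; [right|left|left].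
have attain i : tmatvec M z i = Some (q i) -> exists2 j, z j = Some (cv j) & i = g j.
  rewrite /tmatvec => /bigtmax_Some[j _].
  case E: (M i j) => [m|] //; case Z: (z j) => [x|] //= [hx].
  have hxc := zle j x Z; have hcm := cv_le E.
  have ex : x = cv j.
    apply/le_anti; rewrite hxc /=; move: hcm; rewrite -hx.
    by rewrite addrC addKr.
  exists j; first by rewrite Z ex.
  by apply: hred; apply/redP; exists m => //; rewrite -hx -ex addrC addKr.
pose S := [set j | z j != None].
pose T := [set j | z j == Some (cv j)].
have hST : S \subset g @: T.
  apply/subsetP => i; rewrite inE => hi.
  have hw : w i = None by case: (comp i) => // e; rewrite e in hi.
  have := h1 i; rewrite hw /= => /attain[j hj ->].
  by apply: imset_f; rewrite inE hj.
have hTS : T \subset S by apply/subsetP => j; rewrite !inE => /eqP->.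
have eTS : T = S.
  apply/eqP; rewrite eqEcard hTS /=.
  exact: leq_trans (subset_leq_card hST) (leq_imset_card _ _).
have hgS : g @: S = S.
  apply/esym/eqP; rewrite eqEcard -{2}eTS hST /=.
  by rewrite -{1}eTS; apply: leq_trans (leq_imset_card _ _) (subset_leq_card hTS).
have hne : S != set0 by apply/set0Pn; exists j0; rewrite inE.
have [K hK eK] := key hred hgS hne.
have ->: (w, z) = solK K.
  rewrite /solK eK; congr pair; apply/ffunP => i; rewrite !ffunE.
    case: ifP => hi.
      by case: (comp i) => // e; move: hi; rewrite inE e.
    have := h1 i; move=> /tmax_Some[//|/attain[j hj ei]].
    suff: i \in S by rewrite hi.
    by rewrite -hgS ei imset_f // -eTS inE hj.
  case: ifP => hi; first by move: hi; rewrite -eTS inE => /eqP.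
  by move/negbT: hi; rewrite inE negbK => /eqP.
by apply: map_f; rewrite mem_enum.
Qed.

End Main.

Theorem theorem3p4 (R : realFieldType) (n : nat) (M : 'M[option R]_n)
    (q : 'I_n -> R) :
  (forall j : 'I_n, exists i : 'I_n, M i j != None) ->
  (exists s : seq ({ffun 'I_n -> option R} * {ffun 'I_n -> option R}),
      [/\ uniq s, size s = (2 ^ tnecp_kappa M q - 1)%N &
          forall p, p \in s -> tnecp_solution M q p.1 p.2]) /\
  (tnecp_nondegenerate M q ->
    exists s : seq ({ffun 'I_n -> option R} * {ffun 'I_n -> option R}),
      uniq s /\ size s = (2 ^ tnecp_kappa M q - 1)%N /\
      forall w z : {ffun 'I_n -> option R},
        tnecp_solution M q w z <-> (w, z) \in s).
Proof.
move=> Hcol; split.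
  exists (sols M q); split.
  - exact: sols_uniq.
  - exact: sols_size.
  - move=> p; exact: (sols_sol Hcol).
move=> hnd; exists (sols M q); split; first exact: sols_uniq.
split; first exact: sols_size.
move=> w z; split; first exact: (sol_in_sols Hcol hnd).
by move/(sols_sol Hcol).
Qed.
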